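(* Let $1,2,3,4$ be four distinct vertices of $G$ such that $G[\{1,2,3\}]$ has edge set exactly $\{12,23\}$, $G[\{2,3,4\}]$ has edge set exactly $\{23,24,34\}$, and $w_{23}\ge w_{24}$ (nothing is assumed about whether $14$ is an edge). If $\Gamma_G$ is population monotonic, then $w_{23}\ge w_{12}+w_{34}$ and $w_{23}\ge w_{24}+w_{34}$.
   Context: $G=(V,E;w)$ is a finite simple graph with edge weights $w:E\to\mathbb{R}$, $w_e>0$ for all $e\in E$; $w_{ij}$ denotes the weight of edge $ij$. The matching game on $G$ is the cooperative game $\Gamma_G=(N,\gamma)$ with player set $N=V$ and, for $S\subseteq N$, $\gamma(S)$ equal to the maximum weight of a matching in the induced subgraph $G[S]$ (so $\gamma(\emptyset)=0$). A population monotonic allocation scheme (PMAS) is a family $(\boldsymbol{x}_S)_{\emptyset\neq S\subseteq N}$ with $\boldsymbol{x}_S=(x_{S,i})_{i\in S}\in\mathbb{R}^S$ such that (efficiency) $\sum_{i\in S}x_{S,i}=\gamma(S)$ for every nonempty $S\subseteq N$, and (monotonicity) $x_{S,i}\le x_{T,i}$ whenever $\emptyset\ne S\subseteq T\subseteq N$ and $i\in S$. $\Gamma_G$ is called population monotonic if it admits a PMAS. *)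

(* Defs.v *)
From mathcomp Require Import all_boot all_order all_algebra.
Set Implicit Arguments. Unset Strict Implicit. Unset Printing Implicit Defensive.
Import Order.TTheory GRing.Theory Num.Theory.
Local Open Scope ring_scope.

(* A finite simple graph on vertex type T: symmetric irreflexive adjacency e.
   Edge weights are given as a function on 2-element vertex sets:
   w_{ij} := w [set i; j]. *)
Definition simple_graph (T : finType) (e : rel T) : Prop :=
  (forall x, ~~ e x x) /\ (forall x y, e x y = e y x).

Definition pos_weights (T : finType) (R : realFieldType) (e : rel T)
  (w : {set T} -> R) : Prop :=
  forall x y, e x y -> 0 < w [set x; y].

Definition is_edge_in (T : finType) (e : rel T) (S : {set T}) (f : {set T}) : bool :=
  [exists x, exists y, [&& x \in S, y \in S, e x y & f == [set x; y]]].

Definition is_matching (T : finType) (e : rel T) (S : {set T}) (M : {set {set T}}) : bool :=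
  [forall f in M, is_edge_in e S f] &&
  [forall f in M, forall g in M, (f != g) ==> [disjoint f & g]].

Definition gamma (T : finType) (R : realFieldType) (e : rel T) (w : {set T} -> R)
  (S : {set T}) : R :=
  \big[Num.max/0]_(M : {set {set T}} | is_matching e S M) \sum_(f in M) w f.

(* population monotonic allocation scheme: x S i is x_{S,i} (only meaningful for i in S) *)
Definition is_PMAS (T : finType) (R : realFieldType) (e : rel T) (w : {set T} -> R)
  (x : {set T} -> T -> R) : Prop :=
  (forall S : {set T}, S != set0 -> \sum_(i in S) x S i = gamma e w S) /\
  (forall S U : {set T}, S != set0 -> S \subset U -> forall i, i \in S -> x S i <= x U i).

Definition population_monotonic (T : finType) (R : realFieldType) (e : rel T)
  (w : {set T} -> R) : Prop :=
  exists x : {set T} -> T -> R, is_PMAS e w x.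

(* Main.v *)
Require Import Defs.
From mathcomp Require Import all_boot all_order all_algebra.
From mathcomp Require Import lra zify.
Import Order.TTheory GRing.Theory Num.Theory.
Local Open Scope ring_scope.

Section H.
Variables (T : finType) (R : realFieldType) (e : rel T) (w : {set T} -> R).

Lemma gamma_ge (M : {set {set T}}) (S : {set T}) : is_matching e S M -> \sum_(f in M) w f <= gamma e w S.
Proof. move=> HM; rewrite /gamma; exact: le_bigmax_cond. Qed.

Lemma gamma_ge0 (S : {set T}) : 0 <= gamma e w S.
Proof.
have : is_matching e S set0.
  by apply/andP; split; apply/forallP => f; rewrite in_set0.
by move/gamma_ge; rewrite big_set0.
Qed.

Lemma gamma_ge_edge (S : {set T}) x y : x \in S -> y \in S -> e x y -> w [set x; y] <= gamma e w S.
Proof.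
move=> xS yS exy.
have : is_matching e S [set [set x; y]].
  apply/andP; split; apply/forallP => f; apply/implyP; rewrite in_set1 => /eqP ->.
    by apply/existsP; exists x; apply/existsP; exists y; rewrite xS yS exy eqxx.
  by apply/forallP => g; apply/implyP; rewrite in_set1 => /eqP ->; rewrite eqxx.
by move/gamma_ge; rewrite big_set1.
Qed.

Lemma match_le1 (S : {set T}) (M : {set {set T}}) : simple_graph e -> (#|S| <= 3)%N -> is_matching e S M -> (#|M| <= 1)%N.
Proof.
move=> [irr _] HS /andP[/forallP He /forallP Hd].
rewrite leqNgt; apply/negP => /card_gt1P [f [g [fM gM fg]]].
have edge2 h : h \in M -> h \subset S /\ #|h| = 2%N.
  move=> hM; move: (He h); rewrite hM /= => /existsP[x /existsP[y /and4P[xS yS exy /eqP ->]]].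
  split; first by apply/subsetP => z; rewrite !inE => /orP[] /eqP ->.
  rewrite cards2; case: eqP => // xy; by move: exy (irr x); rewrite xy => ->.
have := Hd f; rewrite fM => /forallP /(_ g); rewrite gM fg /= => dis.
have [fS cf] := edge2 f fM; have [gS cg] := edge2 g gM.
have : (#|f :|: g| <= #|S|)%N by apply: subset_leq_card; rewrite subUset fS gS.
rewrite cardsU (disjoint_setI0 dis) cards0 cf cg => H; lia.
Qed.

Lemma gamma_le3 (S : {set T}) U : simple_graph e -> (#|S| <= 3)%N -> 0 <= U ->
  (forall f, is_edge_in e S f -> w f <= U) -> gamma e w S <= U.
Proof.
move=> sg HS U0 HU; rewrite /gamma; apply: bigmax_le => // M HM.
have := match_le1 S M sg HS HM; rewrite leq_eqVlt ltnS leqn0 => /orP[/cards1P [f]|/eqP/cards0_eq ->].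
  move=> EM; rewrite EM big_set1; apply: HU.
  by case/andP: HM => /forallP /(_ f); rewrite EM in_set1 eqxx.
by rewrite big_set0.
Qed.

Lemma sum2 (F : T -> R) a b : a != b -> \sum_(i in [set a; b]) F i = F a + F b.
Proof. by move=> ab; rewrite big_setU1 ?big_set1 // in_set1. Qed.

Lemma sum3 (F : T -> R) a b c : a != b -> a != c -> b != c ->
  \sum_(i in [set a; b; c]) F i = F a + F b + F c.
Proof. move=> ab ac bc; rewrite setUC big_setU1 ?sum2 //; last by rewrite !inE negb_or eq_sym ac eq_sym bc.
exact: addrC. Qed.

Lemma card3 (a b c : T) : (#|[set a; b; c]| <= 3)%N.
Proof. rewrite setUC cardsU1 cards2; by case: (_ \notin _); case: (_ != _). Qed.

End H.

Ltac sub2 := apply/subsetP => z; rewrite !inE => /orP[] /eqP ->; rewrite eqxx ?orbT.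

Theorem mainTheorem3 (T : finType) (R : realFieldType) (e : rel T)
  (w : {set T} -> R) (v1 v2 v3 v4 : T) :
  simple_graph e -> pos_weights e w ->
  uniq [:: v1; v2; v3; v4] ->
  e v1 v2 -> e v2 v3 -> ~~ e v1 v3 ->
  e v2 v4 -> e v3 v4 ->
  w [set v2; v4] <= w [set v2; v3] ->
  population_monotonic e w ->
  w [set v1; v2] + w [set v3; v4] <= w [set v2; v3] /\
  w [set v2; v4] + w [set v3; v4] <= w [set v2; v3].
Proof.
move=> sg pw Hu e12 e23 n13 e24 e34 hcb [x [Heff Hmon]].
case: (sg) => irr sym.
have n12 : v1 != v2 by apply/eqP => E; move: Hu; rewrite E /= !inE eqxx.
have n13' : v1 != v3 by apply/eqP => E; move: Hu; rewrite E /= !inE eqxx ?orbT /= ?andbF.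
have n23 : v2 != v3 by apply/eqP => E; move: Hu; rewrite E /= !inE eqxx ?orbT /= ?andbF.
have n24 : v2 != v4 by apply/eqP => E; move: Hu; rewrite E /= !inE eqxx ?orbT /= ?andbF.
have n34 : v3 != v4 by apply/eqP => E; move: Hu; rewrite E /= !inE eqxx ?orbT /= ?andbF.
have ne0 : forall (S : {set T}) z, z \in S -> S != set0 by move=> S z zS; apply/set0Pn; exists z.
have pa := pw _ _ e12; have pb := pw _ _ e23; have pc := pw _ _ e24; have pd := pw _ _ e34.
set a := w [set v1; v2] in pa *; set b := w [set v2; v3] in pb hcb *;
set c := w [set v2; v4] in pc hcb *; set d := w [set v3; v4] in pd *.
have E12 := Heff [set v1; v2] (ne0 _ v1 (set21 _ _)).
rewrite sum2 // in E12.
have L12 := @gamma_ge_edge _ _ e w _ _ _ (set21 v1 v2) (set22 v1 v2) e12.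
have E23 := Heff [set v2; v3] (ne0 _ v2 (set21 _ _)).
rewrite sum2 // in E23.
have L23 := @gamma_ge_edge _ _ e w _ _ _ (set21 v2 v3) (set22 v2 v3) e23.
have E24 := Heff [set v2; v4] (ne0 _ v2 (set21 _ _)).
rewrite sum2 // in E24.
have L24 := @gamma_ge_edge _ _ e w _ _ _ (set21 v2 v4) (set22 v2 v4) e24.
have E34 := Heff [set v3; v4] (ne0 _ v3 (set21 _ _)).
rewrite sum2 // in E34.
have L34 := @gamma_ge_edge _ _ e w _ _ _ (set21 v3 v4) (set22 v3 v4) e34.
have E4 := Heff [set v4] (ne0 _ v4 (set11 _)).
rewrite big_set1 in E4.
have L4 := @gamma_ge0 _ _ e w [set v4].
have E123 := Heff [set v1; v2; v3] (ne0 [set v1; v2; v3] v1 ltac:(by rewrite !inE eqxx)).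
rewrite sum3 // in E123.
have U123 : gamma e w [set v1; v2; v3] <= Num.max a b.
  apply: gamma_le3 => //; first exact: card3; first by rewrite le_max ltW.
  move=> f /existsP[y /existsP[z /and4P[yS zS eyz /eqP ->]]].
  move: yS zS eyz; rewrite !inE => /orP[/orP[]|] /eqP -> /orP[/orP[]|] /eqP -> eyz;
  first [ by rewrite (negbTE (irr _)) in eyz | by rewrite (negbTE n13) in eyz
        | by rewrite sym (negbTE n13) in eyz | by rewrite le_max lexx ?orbT
        | by rewrite setUC le_max lexx ?orbT ].
have E234 := Heff [set v2; v3; v4] (ne0 [set v2; v3; v4] v2 ltac:(by rewrite !inE eqxx)).
rewrite sum3 // in E234.
have U234 : gamma e w [set v2; v3; v4] <= Num.max b (Num.max c d).
  apply: gamma_le3 => //; first exact: card3; first by rewrite le_max ltW.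
  move=> f /existsP[y /existsP[z /and4P[yS zS eyz /eqP ->]]].
  move: yS zS eyz; rewrite !inE => /orP[/orP[]|] /eqP -> /orP[/orP[]|] /eqP -> eyz;
  first [ by rewrite (negbTE (irr _)) in eyz
        | by rewrite !le_max lexx ?orbT
        | by rewrite setUC !le_max lexx ?orbT ].
have m1 := Hmon [set v1; v2] [set v1; v2; v3] (ne0 _ v1 (set21 _ _)) ltac:(sub2) v1 (set21 _ _).
have m2 := Hmon [set v1; v2] [set v1; v2; v3] (ne0 _ v1 (set21 _ _)) ltac:(sub2) v2 (set22 _ _).
have m3 := Hmon [set v2; v3] [set v1; v2; v3] (ne0 _ v2 (set21 _ _)) ltac:(sub2) v3 (set22 _ _).
have m4 := Hmon [set v2; v3] [set v2; v3; v4] (ne0 _ v2 (set21 _ _)) ltac:(sub2) v2 (set21 _ _).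
have m5 := Hmon [set v2; v3] [set v2; v3; v4] (ne0 _ v2 (set21 _ _)) ltac:(sub2) v3 (set22 _ _).
have m6 := Hmon [set v2; v4] [set v2; v3; v4] (ne0 _ v2 (set21 _ _)) ltac:(sub2) v2 (set21 _ _).
have m7 := Hmon [set v2; v4] [set v2; v3; v4] (ne0 _ v2 (set21 _ _)) ltac:(sub2) v4 (set22 _ _).
have m8 := Hmon [set v3; v4] [set v2; v3; v4] (ne0 _ v3 (set21 _ _)) ltac:(sub2) v3 (set21 _ _).
have m9 := Hmon [set v3; v4] [set v2; v3; v4] (ne0 _ v3 (set21 _ _)) ltac:(sub2) v4 (set22 _ _).
have m10 := Hmon [set v4] [set v2; v3; v4] (ne0 _ v4 (set11 _))
  ltac:(by rewrite sub1set !inE eqxx ?orbT) v4 (set11 _).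
rewrite le_max in U123; rewrite !le_max in U234.
subst a b c d.
case/orP: U123 => U123; case/orP: U234 => [U234|/orP[U234|U234]]; split; lra.
Qed.
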